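(* Let $\hat{x}$ be the final value of the vector $x$ in Algorithm 1. If $\|\hat{x}\|_1=k$, then $F(\hat{x})\ge c\tau$.
   Context: Setting: finite ground set $N$ whose elements arrive one at a time in a stream, non-negative submodular $f\colon 2^N\to\mathbb{R}_{\ge 0}$, positive integer $k$. $F$ is the multilinear extension of $f$: $F(x)=\sum_{A\subseteq N} f(A)\prod_{u\in A}x_u\prod_{u\notin A}(1-x_u)$ for $x\in[0,1]^N$, and $\partial_uF(x)=F(x\vee \mathbf{1}_u)-F(x\wedge\mathbf{1}_{N\setminus\{u\}})$ (coordinatewise max/min with characteristic vectors). $\mathrm{supp}(x)=\{u: x_u>0\}$. Algorithm 1 has parameters $p\in(0,1)$, $c>0$, $\alpha\in(0,1]$ and a number $\tau$ (an estimate of the optimal value). It starts with $x=\mathbf{0}$, and when an element $u$ arrives, if $\partial_uF(x)\ge c\tau/k$ it sets $x\leftarrow x+\min\{p,\,k-\|x\|_1\}\cdot\mathbf{1}_u$ (otherwise $x$ is unchanged). After the stream ends, it computes a random set $S_1$ with $|S_1|\le k$ and $\mathbb{E}[f(S_1)]\ge F(x)$ (by rounding $x$), and a random set $S_2\subseteq\mathrm{supp}(x)$ with $|S_2|\le k$ and $\mathbb{E}[f(S_2)]\ge\alpha\cdot\max_{S\subseteq\mathrm{supp}(x),|S|\le k}f(S)$, and outputs the better of $S_1,S_2$. *)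

(* Defs.v *)
From mathcomp Require Import all_boot all_order all_algebra.
Set Implicit Arguments. Unset Strict Implicit. Unset Printing Implicit Defensive.
Import Order.TTheory GRing.Theory Num.Theory.
Local Open Scope ring_scope.

Section Defs.
Variables (T : finType) (R : realFieldType).

Definition nonneg_setfun (f : {set T} -> R) : Prop := forall A, 0 <= f A.
Definition submodular (f : {set T} -> R) : Prop :=
  forall A B, f (A :|: B) + f (A :&: B) <= f A + f B.

Definition multilinear_ext (f : {set T} -> R) (x : T -> R) : R :=
  \sum_(A : {set T}) f A * (\prod_(u in A) x u) * (\prod_(u in ~: A) (1 - x u)).

Definition charvec (A : {set T}) : T -> R := fun v => if v \in A then 1 else 0.
Definition vjoin (x y : T -> R) : T -> R := fun v => Num.max (x v) (y v).
Definition vmeet (x y : T -> R) : T -> R := fun v => Num.min (x v) (y v).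

Definition partialF (f : {set T} -> R) (u : T) (x : T -> R) : R :=
  multilinear_ext f (vjoin x (charvec [set u]))
  - multilinear_ext f (vmeet x (charvec (~: [set u]))).

Definition l1norm (x : T -> R) : R := \sum_(u : T) `|x u|.

Definition alg1_step (f : {set T} -> R) (k : nat) (p c tau : R)
    (x : T -> R) (u : T) : T -> R :=
  if c * tau / k%:R <= partialF f u x
  then (fun v => x v + Num.min p (k%:R - l1norm x) * charvec [set u] v)
  else x.

Definition alg1_final (f : {set T} -> R) (k : nat) (p c tau : R)
    (s : seq T) : T -> R :=
  foldl (alg1_step f k p c tau) (fun _ => 0) s.

End Defs.

(* Main.v *)
Require Import Defs.
From mathcomp Require Import all_boot all_order all_algebra.
From mathcomp Require Import ring lra.
Import Order.TTheory GRing.Theory Num.Theory.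
Local Open Scope ring_scope.

Section Aux.
Variables (T : finType) (R : realFieldType) (f : {set T} -> R).

Definition upd (x : T -> R) (u : T) (a : R) : T -> R :=
  fun v => if v == u then a else x v.

Lemma F_ext (x y : T -> R) : (forall v, x v = y v) ->
  multilinear_ext f x = multilinear_ext f y.
Proof.
move=> H; rewrite /multilinear_ext; apply: eq_bigr => A _.
congr (_ * _ * _); apply: eq_bigr => v _; by rewrite H.
Qed.

Lemma term_split (A : {set T}) (x : T -> R) (u : T) :
  f A * (\prod_(v in A) x v) * (\prod_(v in ~: A) (1 - x v)) =
  x u * (f A * (\prod_(v in A) upd x u 1 v) * (\prod_(v in ~: A) (1 - upd x u 1 v)))
  + (1 - x u) * (f A * (\prod_(v in A) upd x u 0 v) * (\prod_(v in ~: A) (1 - upd x u 0 v))).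
Proof.
have Hne : forall a (P : pred T), \big[*%R/1]_(v | P v && (v != u)) upd x u a v
   = \big[*%R/1]_(v | P v && (v != u)) x v.
  by move=> a P; apply: eq_bigr => v /andP[_ /negbTE]; rewrite /upd => ->.
have Hne' : forall a (P : pred T), \big[*%R/1]_(v | P v && (v != u)) (1 - upd x u a v)
   = \big[*%R/1]_(v | P v && (v != u)) (1 - x v).
  by move=> a P; apply: eq_bigr => v /andP[_ /negbTE]; rewrite /upd => ->.
case uA: (u \in A).
- have Hc : forall a, \prod_(v in ~: A) (1 - upd x u a v) = \prod_(v in ~: A) (1 - x v).
    move=> a; apply: eq_bigr => v; rewrite in_setC /upd; case: eqP => // ->.
    by rewrite uA.
  rewrite !Hc (bigD1 u uA) (bigD1 u uA) (bigD1 u uA) /= !Hne /upd eqxx; ring.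
- have uC : u \in ~: A by rewrite in_setC uA.
  have Hc : forall a, \prod_(v in A) upd x u a v = \prod_(v in A) x v.
    move=> a; apply: eq_bigr => v; rewrite /upd; case: eqP => // ->.
    by rewrite uA.
  rewrite !Hc (bigD1 u uC) (bigD1 u uC) (bigD1 u uC) /= !Hne' /upd eqxx; ring.
Qed.

Lemma F_split (x : T -> R) (u : T) :
  multilinear_ext f x = x u * multilinear_ext f (upd x u 1)
    + (1 - x u) * multilinear_ext f (upd x u 0).
Proof.
rewrite /multilinear_ext !mulr_sumr -big_split /=; apply: eq_bigr => A _.
by rewrite (term_split A x u) !mulrA.
Qed.

Lemma F_step (x : T -> R) (u : T) (d : R) :
  multilinear_ext f (fun v => x v + d * charvec R [set u] v) =
  multilinear_ext f x + d * (multilinear_ext f (upd x u 1) - multilinear_ext f (upd x u 0)).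
Proof.
rewrite (F_split _ u) [in RHS](F_split x u).
have E : forall a, multilinear_ext f (upd (fun v => x v + d * charvec R [set u] v) u a)
   = multilinear_ext f (upd x u a).
  move=> a; apply: F_ext => v; rewrite /upd /charvec in_set1.
  by case: (v == u) => //; rewrite mulr0 addr0.
rewrite !E /charvec in_set1 eqxx; ring.
Qed.

Lemma partialF_eq (x : T -> R) (u : T) : (forall v, 0 <= x v <= 1) ->
  partialF f u x = multilinear_ext f (upd x u 1) - multilinear_ext f (upd x u 0).
Proof.
move=> H; rewrite /partialF; congr (_ - _); apply: F_ext => v;
  rewrite /vjoin /vmeet /upd /charvec ?in_setC in_set1;
  have /andP[H0 H1] := H v; case: (v == u) => /=.
- by rewrite max_r.
- by rewrite max_l.
- by rewrite min_r.
- by rewrite min_l.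
Qed.

Lemma F_ge0 : nonneg_setfun f -> 0 <= multilinear_ext f (fun _ => 0).
Proof.
move=> Hf; rewrite /multilinear_ext; apply: sumr_ge0 => A _.
apply: mulr_ge0; first apply: mulr_ge0 => //.
- by apply: prodr_ge0.
- by apply: prodr_ge0 => v _; rewrite subr0.
Qed.

End Aux.

Theorem lemma3p3 (T : finType) (R : realFieldType)
  (f : {set T} -> R) (k : nat) (p c tau : R) (s : seq T) :
  nonneg_setfun f -> submodular f -> (0 < k)%N ->
  0 < p < 1 -> 0 < c ->
  uniq s -> (forall u : T, u \in s) ->
  l1norm (alg1_final f k p c tau s) = k%:R ->
  c * tau <= multilinear_ext f (alg1_final f k p c tau s).
Proof.
move=> Hf _ Hk /andP[Hp0 Hp1] Hc Hu _.
set F0 := multilinear_ext f (fun _ => 0).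
set ctk := c * tau / k%:R.
pose Q (x : T -> R) := [/\ forall v, 0 <= x v <= p, \sum_v x v <= k%:R &
   F0 + (\sum_v x v) * ctk <= multilinear_ext f x].
have l1E : forall x : T -> R, (forall v, 0 <= x v <= p) -> l1norm x = \sum_v x v.
  move=> x H; rewrite /l1norm; apply: eq_bigr => v _; apply: ger0_norm.
  by case/andP: (H v).
have step : forall x u, Q x -> x u = 0 ->
    Q (alg1_step f k p c tau x u) /\ forall v, v != u -> alg1_step f k p c tau x u v = x v.
  move=> x u [H1 H2 H3] Hxu.
  have H01 : forall v, 0 <= x v <= 1.
    by move=> v; case/andP: (H1 v) => a b; rewrite a /=; apply: le_trans b _; apply: ltW.
  rewrite /alg1_step l1E //.
  case: ifP => Hcond; last by split.
  set d := Num.min p (k%:R - \sum_v x v).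
  have Hd0 : 0 <= d by rewrite le_min (ltW Hp0) subr_ge0 H2.
  have Hdp : d <= p by rewrite ge_min lexx.
  have Hdk : d <= k%:R - \sum_v x v by rewrite ge_min lexx orbT.
  split; last first.
    by move=> v Hv; rewrite /charvec in_set1 (negbTE Hv) mulr0 addr0.
  have Hsum : \sum_v (x v + d * charvec R [set u] v) = \sum_v x v + d.
    rewrite big_split /= -mulr_sumr; congr (_ + _).
    rewrite (bigD1 u) //= big1 ?addr0.
      by rewrite /charvec in_set1 eqxx mulr1.
    by move=> v Hv; rewrite /charvec in_set1 (negbTE Hv).
  split.
  - move=> v; rewrite /charvec in_set1; case: eqP => [->|_].
      by rewrite Hxu add0r mulr1 Hd0 Hdp.
    by rewrite mulr0 addr0 H1.
  - by rewrite Hsum; lra.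
  - rewrite Hsum F_step -partialF_eq //.
    have : d * ctk <= d * partialF f u x by apply: ler_wpM2l.
    lra.
have main : forall s x, uniq s -> (forall v, v \in s -> x v = 0) -> Q x ->
    Q (foldl (alg1_step f k p c tau) x s).
  elim=> [|u s' IH] x //= /andP[us' Hs'] Hz HQ.
  have [HQ' He] := step x u HQ (Hz u (mem_head _ _)).
  apply: IH => // v vs; rewrite He; first by apply: Hz; rewrite in_cons vs orbT.
  by apply/eqP => E; rewrite -E vs in us'.
have [H1 H2 H3] : Q (alg1_final f k p c tau s).
  apply: main => //; split.
  - by move=> v; rewrite lexx ltW.
  - by rewrite big1 // ler0n.
  - by rewrite big1 // mul0r addr0.
move=> Hn; rewrite l1E // in Hn.
rewrite Hn in H3.
have Hk0 : (k%:R : R) != 0 by rewrite pnatr_eq0 -lt0n.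
have : k%:R * ctk = c * tau by rewrite /ctk mulrCA divff // mulr1.
have := @F_ge0 T R f Hf; rewrite -/F0.
lra.
Qed.
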